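(* Let $\mathcal{C}$ be an $(n,k,d)$ linear MDS code over a finite field $\mathbb{F}_q$ with $d \ge 2$. Then $$\frac{1}{d-1}\binom{n}{d-2} \le \rho(\mathcal{C}) \le \binom{n}{d-2}.$$
   Context: An $(n,k,d)$ linear MDS code is a linear code over $\mathbb{F}_q$ of length $n$, dimension $k$ and minimum Hamming distance $d = n-k+1$. A parity-check matrix for $\mathcal{C}$ is any matrix (possibly with linearly dependent rows) whose rows span $\mathcal{C}^\perp$. For a parity-check matrix $H$, the stopping distance $s(H)$ is the largest integer such that for every set of $s(H)-1$ or fewer columns of $H$, the projection of $H$ onto those columns contains at least one row with exactly one nonzero entry. The stopping redundancy $\rho(\mathcal{C})$ is the smallest number of rows of a parity-check matrix $H$ for $\mathcal{C}$ with $s(H) = d$. *)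

(* Defs.v *)
From HB Require Import structures.
From mathcomp Require Import all_boot all_order all_algebra all_field.
Set Implicit Arguments. Unset Strict Implicit. Unset Printing Implicit Defensive.
Import GRing.Theory.
Local Open Scope ring_scope.

(* A linear code of length n over F is the row space of a matrix
   C : 'M[F]_(m, n) (any number m of generating rows). *)

Definition wt (F : fieldType) (n : nat) (v : 'rV[F]_n) : nat :=
  #|[set j : 'I_n | v 0 j != 0]|.

Definition codeword (F : fieldType) (m n : nat) (C : 'M[F]_(m, n)) (v : 'rV[F]_n) :=
  (v <= C)%MS.

Definition min_dist (F : fieldType) (m n : nat) (C : 'M[F]_(m, n)) (d : nat) : Prop :=
  (exists2 v : 'rV[F]_n, codeword C v /\ v != 0 & wt v = d) /\
  (forall v : 'rV[F]_n, codeword C v -> v != 0 -> (d <= wt v)%N).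

Definition MDS_code (F : fieldType) (m n : nat) (C : 'M[F]_(m, n)) (k d : nat) : Prop :=
  \rank C = k /\ min_dist C d /\ d = (n - k + 1)%N.

Definition parity_check (F : fieldType) (m n r : nat)
    (C : 'M[F]_(m, n)) (H : 'M[F]_(r, n)) : Prop :=
  forall u : 'rV[F]_n, (u <= H)%MS = (u *m C^T == 0).

Definition has_single_row (F : fieldType) (r n : nat) (H : 'M[F]_(r, n))
    (S : {set 'I_n}) : Prop :=
  exists i : 'I_r, #|[set j in S | H i j != 0]| = 1%N.

Definition cols_ok (F : fieldType) (r n : nat) (H : 'M[F]_(r, n)) (t : nat) : Prop :=
  forall S : {set 'I_n}, (0 < #|S|)%N -> (#|S| <= t)%N -> has_single_row H S.

(* s(H) = s : s is the largest integer such that every set of s-1 or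
   fewer (nonempty) columns has the property. *)
Definition stopping_distance_is (F : fieldType) (r n : nat) (H : 'M[F]_(r, n))
    (s : nat) : Prop :=
  cols_ok H s.-1 /\ ~ cols_ok H s.

(* Main.v *)
Require Import Defs.
From HB Require Import structures.
From mathcomp Require Import all_boot all_order all_algebra all_field.
From mathcomp Require Import zify.
Set Implicit Arguments. Unset Strict Implicit. Unset Printing Implicit Defensive.
Import GRing.Theory.

Lemma subset_of_card (T : finType) (A : {set T}) m :
  (m <= #|A|)%N -> exists2 B : {set T}, B \subset A & #|B| = m.
Proof.
elim: m => [|m IH] hm; first by exists set0; [exact: sub0set | exact: cards0].
have [B BA cB] := IH (ltnW hm).
have : B \proper A by rewrite properEcard BA cB hm.
case/properP => _ [x xA xB]; exists (x |: B); first by rewrite subUset sub1set xA BA.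
by rewrite cardsU1 xB cB.
Qed.

Section Sel.
Local Open Scope ring_scope.
Variables (F : fieldType) (n : nat).

Definition supp (v : 'rV[F]_n) := [set j | v 0 j != 0].
Lemma wtE (v : 'rV[F]_n) : wt v = #|supp v|. Proof. by []. Qed.

Definition selm (T : {set 'I_n}) : 'M[F]_(#|T|, n) :=
  \matrix_(t, j) (j == enum_val t)%:R.

Lemma mul_selmT (v : 'rV[F]_n) (T : {set 'I_n}) t : (v *m (selm T)^T) 0 t = v 0 (enum_val t).
Proof.
rewrite !mxE (bigD1 (enum_val t)) //= big1 => [|j /negbTE nj].
  by rewrite !mxE eqxx mulr1 addr0.
by rewrite !mxE nj mulr0.
Qed.

Lemma mul_selm_out (T : {set 'I_n}) (x : 'rV[F]_#|T|) j : j \notin T -> (x *m selm T) 0 j = 0.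
Proof.
move=> jT; rewrite mxE big1 // => t _; rewrite mxE.
case: eqP => [e|_]; last by rewrite mulr0.
by move: jT; rewrite e enum_valP.
Qed.

Lemma supp_mul_selm (T : {set 'I_n}) (x : 'rV[F]_#|T|) : supp (x *m selm T) \subset T.
Proof.
apply/subsetP => j; rewrite inE; apply: contraR => jT.
by rewrite mul_selm_out ?eqxx.
Qed.

Lemma selm_selmT (T : {set 'I_n}) : selm T *m (selm T)^T = 1%:M.
Proof.
apply/matrixP => s t.
have -> : (selm T *m (selm T)^T) s t = row s (selm T *m (selm T)^T) 0 t by rewrite [RHS]mxE.
rewrite row_mul mul_selmT.
by rewrite !mxE (inj_eq enum_val_inj) eq_sym.
Qed.

Lemma selm_id (v : 'rV[F]_n) (T : {set 'I_n}) : supp v \subset T -> v *m (selm T)^T *m selm T = v.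
Proof.
move=> sT; apply/rowP => j; rewrite mxE.
have [jT|jT] := boolP (j \in T).
  rewrite (bigD1 (enum_rank_in jT j)) //= big1 => [|t nt].
    by rewrite mul_selmT !mxE enum_rankK_in // eqxx mulr1 addr0.
  rewrite !mxE; case: eqP => [e|_]; last by rewrite mulr0.
  by case/eqP: nt; rewrite -{1}(enum_valK_in jT t) -e.
have -> : v 0 j = 0.
  by apply/eqP; apply: contraR jT => nz; apply: (subsetP sT); rewrite inE.
by rewrite big1 // => t _; rewrite !mxE; case: eqP => [e|]; [move: jT; rewrite e enum_valP | rewrite mulr0].
Qed.

Lemma dotE (u v : 'rV[F]_n) : (u *m v^T) 0 0 = \sum_j u 0 j * v 0 j.
Proof. by rewrite mxE; apply: eq_bigr => j _; rewrite mxE. Qed.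

End Sel.

Section Code.
Local Open Scope ring_scope.
Variables (F : fieldType) (m n k d : nat) (C : 'M[F]_(m, n)).
Hypothesis rankC : \rank C = k.
Hypothesis mind1 : exists2 v : 'rV[F]_n, codeword C v /\ v != 0 & wt v = d.
Hypothesis mind : forall v : 'rV[F]_n, codeword C v -> v != 0 -> (d <= wt v)%N.
Hypothesis hd : d = (n - k + 1)%N.

Lemma ortho (h c : 'rV[F]_n) : (c <= C)%MS -> h *m C^T = 0 -> h *m c^T = 0.
Proof. by case/submxP => x -> hC; rewrite trmx_mul mulmxA hC mul0mx. Qed.

Lemma kn : (k <= n)%N.
Proof. by rewrite -rankC rank_leq_col. Qed.

Lemma dual_wt (h : 'rV[F]_n) : h *m C^T = 0 -> h != 0 -> (k < wt h)%N.
Proof.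
move=> hC hnz; rewrite ltnNge; apply/negP => hk.
have kn := kn.
have cS := cardsC (supp h); rewrite card_ord in cS.
have [B BA cB] := @subset_of_card _ (~: supp h) (k - wt h) ltac:(rewrite wtE in hk *; lia).
set T := supp h :|: B.
have I0 : supp h :&: B = set0.
  apply/setP => j; rewrite !inE; apply/negP => /andP[j1 j2].
  by have := subsetP BA j j2; rewrite !inE j1.
have cT : #|T| = k.
  have := cardsUI (supp h) B; rewrite I0 cards0 addn0 cB => ->.
  by rewrite wtE in hk *; lia.
set S := selm F T.
have hT : supp h \subset T by exact: subsetUl.
have K0 : (C :&: kermx S^T)%MS == 0.
  apply/rowV0P => v; rewrite sub_capmx sub_kermx => /andP[vC /eqP vS].
  apply/eqP; apply: contraT => vnz.
  have := mind vC vnz.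
  have : (wt v <= #|~: T|)%N.
    apply: subset_leq_card; apply/subsetP => j; rewrite in_setC; apply: contraTN => jT.
    by rewrite inE negbK -(enum_rankK_in jT jT) -mul_selmT vS mxE.
  have := cardsC T; rewrite card_ord cT; lia.
have rM : \rank (C *m S^T) = k.
  by have := mxrank_mul_ker C S^T; rewrite (eqP (K0 : _)) ?mxrank0 //; rewrite addn0 rankC.
have rf : row_free (C *m S^T)^T by rewrite -row_leq_rank mxrank_tr rM cT.
have z0 : h *m S^T = 0.
  apply: (row_free_inj rf); rewrite mul0mx trmx_mul trmxK !mulmxA.
  by rewrite -[h *m _ *m _]/(h *m S^T *m S) (selm_id hT) hC.
by case/eqP: hnz; rewrite -(selm_id hT) z0 mul0mx.
Qed.

Lemma dual_exists (T : {set 'I_n}) : #|T| = k.+1 ->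
  exists h : 'rV[F]_n, h *m C^T = 0 /\ supp h = T.
Proof.
move=> cT; set S := selm F T.
have : kermx (S *m C^T) != 0.
  rewrite -mxrank_eq0 mxrank_ker.
  have := mxrankM_maxr S C^T; rewrite mxrank_tr rankC; lia.
case/rowV0Pn => x; rewrite sub_kermx mulmxA => /eqP xC xnz.
exists (x *m S); split => //.
have hnz : x *m S != 0.
  apply: contra xnz => /eqP e; apply/eqP.
  by rewrite -[x]mulmx1 -(selm_selmT F T) mulmxA e mul0mx.
have := dual_wt xC hnz; rewrite wtE => hw.
apply/eqP; rewrite eqEcard supp_mul_selm /=; move: hw; rewrite -cT; exact.
Qed.

Lemma not_cols_ok r (H : 'M[F]_(r, n)) : parity_check C H -> ~ cols_ok H d.
Proof.
move=> pH ok; have [v [vC vnz] wv] := mind1.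
have [i hi] : has_single_row H (supp v).
  by apply: ok; rewrite -wtE wv // hd addn1.
have [j0 e] := cards1P (introT eqP hi).
have j0in : j0 \in [set j in supp v | H i j != 0] by rewrite e set11.
move: j0in; rewrite !inE => /andP[v0 h0].
have hC : row i H *m C^T = 0 by apply/eqP; rewrite -pH row_sub.
have := ortho vC hC => /(congr1 (fun M : 'M_1 => M 0 0)).
rewrite dotE (bigD1 j0) //= big1 => [|j nj].
  rewrite mxE addr0 => /eqP; rewrite [X in _ == X]mxE mulf_eq0 (negbTE h0) (negbTE v0) /= //=.
rewrite mxE; have [vj|vj] := eqVneq (v 0 j) 0; first by rewrite vj mulr0.
have [hj|hj] := eqVneq (H i j) 0; first by rewrite hj mul0r.
have : j \in [set j in supp v | H i j != 0] by rewrite !inE vj hj.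
by rewrite e inE (negbTE nj).
Qed.

End Code.

Section Lower.
Local Open Scope ring_scope.
Variables (F : fieldType) (m n k d : nat) (C : 'M[F]_(m, n)).
Hypothesis rankC : \rank C = k.
Hypothesis mind : forall v : 'rV[F]_n, codeword C v -> v != 0 -> (d <= wt v)%N.
Hypothesis hd : d = (n - k + 1)%N.
Hypothesis d2 : (2 <= d)%N.

Lemma lower r (H : 'M[F]_(r, n)) : parity_check C H -> cols_ok H (d - 1) ->
  ('C(n, d - 2) <= (d - 1) * r)%N.
Proof.
move=> pH ok.
have kn := kn rankC.
set Sd := [set S : {set 'I_n} | #|S| == (d - 1)%N].
have cSd : #|Sd| = 'C(n, d - 1) by rewrite card_draws card_ord.
pose Z := fun i : 'I_r => [set j | H i j == 0].
pose G := [set p : 'I_r * 'I_n | (H p.1 p.2 != 0) && (#|Z p.1| == (d - 2)%N)].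
pose P (S : {set 'I_n}) := fun p : 'I_r * 'I_n => (p.2 \in S) && ([set j in S | H p.1 j != 0] == [set p.2]).
pose g := fun S : {set 'I_n} => [pick p | P S p].
have sub : forall S p, S \in Sd -> P S p -> p \in G /\ S = p.2 |: Z p.1.
  move=> S [i j] /=; rewrite inE => /eqP cS /andP[/= jS /eqP e].
  have hij : H i j != 0.
    have : j \in [set j in S | H i j != 0] by rewrite e set11.
    by rewrite inE => /andP[].
  have hC : row i H *m C^T = 0 by apply/eqP; rewrite -pH row_sub.
  have rnz : row i H != 0 by apply: contra hij => /eqP/rowP/(_ j); rewrite !mxE => ->.
  have w := dual_wt rankC mind hd hC rnz.
  have sZ : supp (row i H) = ~: Z i by apply/setP => j'; rewrite !inE mxE.
  rewrite wtE sZ in w.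
  have cZ := cardsC (Z i); rewrite card_ord in cZ.
  have SZ : S :\ j \subset Z i.
    apply/subsetP => j'; rewrite !inE => /andP[nj j'S]; apply: contraR nj => hj'.
    have : j' \in [set j in S | H i j != 0] by rewrite inE j'S hj'.
    by rewrite e inE.
  have cSj := cardsD1 j S; rewrite jS add1n in cSj.
  have eZ : S :\ j = Z i.
    apply/eqP; rewrite eqEcard SZ /=; move: cSj; rewrite cS => cSj.
    set a := #|Z i| in cZ *; set b := #|S :\ j| in cSj *; lia.
  split; last by rewrite -eZ setD1K.
  rewrite inE /= hij -eZ /=; apply/eqP; move: cSj; rewrite cS; set b := #|S :\ j|; lia.
have gS : forall S, S \in Sd -> exists2 p, g S = Some p & p \in G /\ S = p.2 |: Z p.1.
  move=> S SSd; rewrite /g; case: pickP => [p Pp | none]; first by exists p => //; apply: sub.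
  have [i hi] : has_single_row H S.
    by move: SSd; rewrite inE => /eqP cS; apply: ok; lia.
  have [j0 e] := cards1P (introT eqP hi).
  have := none (i, j0); rewrite /P /= e eqxx andbT.
  have : j0 \in [set j in S | H i j != 0] by rewrite e set11.
  by rewrite inE => /andP[->].
have ginj : {in Sd &, injective g}.
  move=> S1 S2 /gS[p1 e1 [_ E1]] /gS[p2 e2 [_ E2]].
  by rewrite e1 e2 E1 E2 => -[->].
have c1 : #|g @: Sd| = #|Sd| by rewrite card_in_imset.
have c2 : (#|g @: Sd| <= #|G|)%N.
  rewrite -(card_imset G (@Some_inj _)); apply: subset_leq_card.
  apply/subsetP => x /imsetP[S /gS[p -> [pG _]] ->]; exact: imset_f.
have c3 : (#|G| <= r * k.+1)%N.
  have -> : #|G| = (\sum_(i < r) #|[set j | (i, j) \in G]|)%N.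
    rewrite -[#|G|]sum1_card big_mkcond /=.
    rewrite (eq_bigr (fun p : 'I_r * 'I_n => (fun i j => if (i, j) \in G then 1 else 0)%N p.1 p.2)); last by case.
    rewrite -(pair_big predT predT (fun i j => if (i, j) \in G then 1 else 0)%N) /=.
    apply: eq_bigr => i _; rewrite -sum1_card [RHS]big_mkcond /=.
    by apply: eq_bigr => j _; rewrite [j \in _]inE.
  rewrite -[r in (_ <= r * _)%N]card_ord -sum_nat_const; apply: leq_sum => i _.
  have [e|ne] := eqVneq #|Z i| (d - 2)%N.
    have := cardsC (Z i); rewrite card_ord => cZ.
    have : (#|[set j | (i, j) \in G]| <= #|~: Z i|)%N.
      by apply: subset_leq_card; apply/subsetP => j; rewrite !inE => /andP[].
    move: cZ e; set a := #|Z i|; set b := #|~: Z i|; set c := #|[set j | (i, j) \in G]|; lia.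
  have -> : [set j | (i, j) \in G] = set0.
    by apply/setP => j; rewrite !inE /= (negbTE ne) andbF.
  by rewrite cards0.
have bin := mul_bin_left n (d - 2).
have e1 : (d - 2).+1 = (d - 1)%N by lia.
have e2 : (n - (d - 2))%N = k.+1 by lia.
rewrite e1 e2 in bin.
have hC : ('C(n, d - 1) <= r * k.+1)%N by lia.
rewrite -(leq_pmul2l (ltn0Sn k)) -bin mulnCA leq_mul2l (mulnC k.+1) hC orbT //.
Qed.

End Lower.

Section Constr.
Local Open Scope ring_scope.
Variables (F : finFieldType) (m n k d : nat) (C : 'M[F]_(m, n)).
Hypothesis rankC : \rank C = k.
Hypothesis mind1 : exists2 v : 'rV[F]_n, codeword C v /\ v != 0 & wt v = d.
Hypothesis mind : forall v : 'rV[F]_n, codeword C v -> v != 0 -> (d <= wt v)%N.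
Hypothesis hd : d = (n - k + 1)%N.
Hypothesis d2 : (2 <= d)%N.

Definition fT (T : {set 'I_n}) : 'rV[F]_n :=
  odflt 0 [pick v : 'rV[F]_n | (v *m C^T == 0) && (supp v == T)].

Lemma fT_dual (T : {set 'I_n}) : fT T *m C^T = 0.
Proof. by rewrite /fT; case: pickP => [v /andP[/eqP -> _]|_] //=; rewrite mul0mx. Qed.

Lemma fT_supp (T : {set 'I_n}) : #|T| = k.+1 -> supp (fT T) = T.
Proof.
move=> cT; rewrite /fT; case: pickP => [v /andP[_ /eqP ->]|none] //=.
have [h [hC hs]] := dual_exists rankC mind hd cT.
by have := none h; rewrite hC hs !eqxx.
Qed.

Definition Ks := [set T : {set 'I_n} | #|T| == k.+1].
Definition Hm : 'M[F]_(#|Ks|, n) := \matrix_(i, j) fT (enum_val i) 0 j.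

Lemma rowHm i : row i Hm = fT (enum_val i).
Proof. by apply/rowP => j; rewrite !mxE. Qed.

Lemma fT_row (T : {set 'I_n}) (TK : T \in Ks) : (fT T <= Hm)%MS.
Proof. by rewrite -(enum_rankK_in TK TK) -rowHm row_sub. Qed.

Lemma span w (u : 'rV[F]_n) : (wt u <= w)%N -> u *m C^T = 0 -> (u <= Hm)%MS.
Proof.
elim: w u => [|w IH] u hw hu; have [->|unz] := eqVneq u 0; rewrite ?sub0mx //.
  by have := dual_wt rankC mind hd hu unz; lia.
have ku := dual_wt rankC mind hd hu unz; rewrite wtE in ku hw.
have [T Tu cT] := @subset_of_card _ (supp u) k.+1 ku.
have TK : T \in Ks by rewrite inE cT.
have sh := fT_supp cT.
have [j jT] : exists j, j \in T.
  by apply/set0Pn; rewrite -card_gt0 cT.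
set h := fT T.
have hj : h 0 j != 0 by move: jT; rewrite -{1}sh inE.
have uj : j \in supp u := subsetP Tu j jT.
set v := u - (u 0 j / h 0 j) *: h.
have vC : v *m C^T = 0 by rewrite mulmxBl -scalemxAl fT_dual scaler0 hu subr0.
have sv : supp v \subset supp u :\ j.
  apply/subsetP => j'; rewrite !inE !mxE; apply: contraR.
  rewrite negb_and negbK => /orP[/eqP ->|uj'].
    by rewrite divfK // subrr.
  have : j' \notin supp h by rewrite sh; apply: contra uj' => /(subsetP Tu); rewrite inE.
  by rewrite inE negbK (eqP (negPn uj')) => /eqP ->; rewrite mulr0 subrr.
have wv : (wt v <= w)%N.
  rewrite wtE; have := subset_leq_card sv; have := cardsD1 j (supp u); rewrite uj.
  set a := #|supp u :\ j|; set b := #|supp v|; set c := #|supp u|; lia.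
have -> : u = v + (u 0 j / h 0 j) *: h by rewrite /v subrK.
rewrite addmx_sub //; [exact: IH | apply: scalemx_sub; exact: fT_row].
Qed.

Lemma Hm_parity : parity_check C Hm.
Proof.
move=> u; apply/idP/idP.
  case/submxP => x ->; rewrite -mulmxA.
  have -> : Hm *m C^T = 0.
    by apply/row_matrixP => i; rewrite row_mul rowHm fT_dual row0.
  by rewrite mulmx0.
move/eqP => hu; exact: (span (leqnn _) hu).
Qed.

Lemma Hm_cols : cols_ok Hm (d - 1).
Proof.
move=> S S0 Sd.
have kn := kn rankC.
have [j jS] : exists j, j \in S by apply/set0Pn; rewrite -card_gt0.
have cSC := cardsC S; rewrite card_ord in cSC.
have [B BS cB] := @subset_of_card _ (~: S) k ltac:(lia).
have jB : j \notin B by apply: contraL jS => /(subsetP BS); rewrite inE.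
set T := j |: B.
have cT : #|T| = k.+1 by rewrite cardsU1 jB cB.
have TK : T \in Ks by rewrite inE cT.
have sh := fT_supp cT.
exists (enum_rank_in TK T).
have -> : [set j' in S | Hm (enum_rank_in TK T) j' != 0] = [set j].
  apply/setP => j'; rewrite !inE mxE enum_rankK_in //.
  have -> : (fT T 0 j' != 0) = (j' \in T) by rewrite -{2}sh inE.
  rewrite in_setU1; have [->|nj] := eqVneq j' j; first by rewrite jS.
  rewrite /=; apply/negbTE; rewrite negb_and; apply/orP.
  case: (boolP (j' \in B)) => jB'; last by right.
  by left; have := subsetP BS j' jB'; rewrite inE.
exact: cards1.
Qed.

Lemma upper : exists (r : nat) (H : 'M[F]_(r, n)),
  [/\ parity_check C H, stopping_distance_is H d & (r <= 'C(n, d - 2))%N].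
Proof.
have kn := kn rankC.
exists #|Ks|, Hm; split.
- exact: Hm_parity.
- split; first by rewrite -subn1; exact: Hm_cols.
  exact: (not_cols_ok mind1 hd Hm_parity).
- rewrite /Ks card_draws card_ord.
  have -> : (d - 2 = n - k.+1)%N by lia.
  rewrite bin_sub //; lia.
Qed.

End Constr.

Theorem theorem16 (F : finFieldType) (m n k d : nat) (C : 'M[F]_(m, n)) :
  MDS_code C k d -> (2 <= d)%N ->
  (forall (r : nat) (H : 'M[F]_(r, n)),
      parity_check C H -> stopping_distance_is H d ->
      ('C(n, d - 2) <= (d - 1) * r)%N) /\
  (exists (r : nat) (H : 'M[F]_(r, n)),
      [/\ parity_check C H, stopping_distance_is H d & (r <= 'C(n, d - 2))%N]).
Proof.
move=> [rankC [[mind1 mind] hd]] d2; split.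
  move=> r H pH [ok _]; apply: (lower rankC mind hd d2 pH).
  by rewrite -subn1 in ok.
exact: (upper rankC mind1 mind hd).
Qed.
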